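(* Let $\mathrm{X},\mathrm{Y}$ be locally compact Hausdorff spaces, let $F(\mathrm{X})\subset C_0(\mathrm{X})_+$ contain sufficiently many functions to peak on compact $G_\delta$ subsets of $\mathrm{X}$, and let $T:F(\mathrm{X})\to C_0(\mathrm{Y})_+$ satisfy $\|Tf_1+\cdots+Tf_n\|=\|f_1+\cdots+f_n\|$ for all $n\in\mathbb{N}$ and $f_1,\dots,f_n\in F(\mathrm{X})$. If $x_1,x_2\in\mathrm{X}$ and $x_1\neq x_2$, then $\operatorname{psupp}_T(x_1)\cap\operatorname{psupp}_T(x_2)=\emptyset$.
   Context: $C_0(\mathrm{X})_+$: nonnegative continuous functions vanishing at infinity, sup-norm. $\operatorname{pk}(f)=\{x: f(x)=\|f\|\}$. $F(\mathrm{X})$ ''contains sufficiently many functions to peak on compact $G_\delta$ subsets'' if every nonempty compact $G_\delta$ set $K\subset\mathrm{X}$ equals $\operatorname{pk}(f)$ for some $f\in F(\mathrm{X})$. For $x\in\mathrm{X}$: $\operatorname{PKat}(x)=\{g\in F(\mathrm{X}): g(x)=\|g\|\}$ and $\operatorname{psupp}_T(x)=\bigcap_{h\in\operatorname{PKat}(x)}\operatorname{pk}(Th)\subset\mathrm{Y}$. *)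

(* Defs.v *)
From HB Require Import structures.
From mathcomp Require Import all_boot all_order all_algebra.
From mathcomp Require Import all_classical all_reals all_analysis.
Set Implicit Arguments. Unset Strict Implicit. Unset Printing Implicit Defensive.
Import Order.TTheory GRing.Theory Num.Theory.
Import numFieldNormedType.Exports.
Local Open Scope classical_set_scope.
Local Open Scope ring_scope.

Section Defs.
Variable R : realType.

Definition supnorm (T : Type) (f : T -> R) : R := sup [set `|f x| | x in [set: T]].

Definition C0plus (X : topologicalType) (f : X -> R) : Prop :=
  continuous f /\ (forall x, 0 <= f x) /\
  (forall eps : R, 0 < eps -> compact [set x | eps <= `|f x|]).

Definition pk (T : Type) (f : T -> R) : set T := [set x | f x = supnorm f].

Definition compact_Gdelta (X : topologicalType) (K : set X) : Prop :=
  compact K /\ exists U : nat -> set X, (forall n, open (U n)) /\ K = \bigcap_n U n.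

Definition peaks_on_compact_Gdelta (X : topologicalType) (F : set (X -> R)) : Prop :=
  forall K : set X, K !=set0 -> compact_Gdelta K -> exists2 f, F f & K = pk f.

Definition PKat (X : Type) (F : set (X -> R)) (x : X) : set (X -> R) :=
  [set g | F g /\ g x = supnorm g].

Definition psupp (X Y : Type) (F : set (X -> R)) (T : (X -> R) -> (Y -> R)) (x : X)
  : set Y := \bigcap_(h in PKat F x) pk (T h).
End Defs.

(* Main.v *)
Require Import Defs.
From HB Require Import structures.
From mathcomp Require Import all_boot all_order all_algebra.
From mathcomp Require Import all_classical all_reals all_analysis.
From mathcomp Require Import lra.
Import Order.TTheory GRing.Theory Num.Theory.
Import numFieldNormedType.Exports.
Local Open Scope classical_set_scope.
Local Open Scope ring_scope.

Lemma C0_bounded (R : realType) (X : topologicalType) (f : X -> R) :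
  C0plus f -> exists M, forall x, f x <= M.
Proof.
move=> [cf [f0 cpt]].
have cS := cpt 1 ltr01.
case: (pselect ([set x | 1 <= `|f x|] !=set0)) => [ne|emp].
  have [c _ Hc] := compact_EVT_max ne cS (continuous_subspaceT cf).
  exists (Num.max 1 (f c)) => x.
  case: (lerP 1 (f x)) => h.
    rewrite le_max; apply/orP; right; apply: Hc; rewrite inE /=.
    by rewrite ger0_norm.
  by rewrite le_max (ltW h).
exists 1 => x; case: (lerP 1 (f x)) => h; last exact: ltW.
by exfalso; apply: emp; exists x => /=; rewrite ger0_norm.
Qed.

Lemma sn_ub (R : realType) (X : Type) (f : X -> R) x :
  (forall y, 0 <= f y) -> (exists M, forall y, f y <= M) -> f x <= supnorm f.
Proof.
move=> f0 [M hM]; rewrite /supnorm.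
have hub : has_ubound [set `|f y| | y in [set: X]].
  by exists M => _ [y _ <-]; rewrite ger0_norm.
have := ub_le_sup hub; move=> /(_ `|f x|); rewrite ger0_norm //; apply.
by exists x => //; rewrite ger0_norm.
Qed.

Lemma sn_le (R : realType) (X : Type) (f : X -> R) c (x0 : X) :
  (forall y, 0 <= f y) -> (forall y, f y <= c) -> supnorm f <= c.
Proof.
move=> f0 hc; rewrite /supnorm; apply: ge_sup.
  by exists `|f x0|, x0.
by move=> _ [y _ <-]; rewrite ger0_norm.
Qed.

Lemma sep_Gdelta (R : realType) (X : topologicalType)
  (hX : hausdorff_space X) (lcX : locally_compact [set: X]) (x : X) (U : set X) :
  open U -> U x -> exists K : set X, compact_Gdelta K /\ K x /\ K `<=` U.
Proof.
move=> oU Ux.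
have := lcX x I; rewrite withinET => -[C nC [cC clC]].
pose W := C° `&` U.
have oW : open W by apply: openI => //; exact: open_interior.
have clB : closed (~` W) by exact: open_closedC.
have nBx : ~ (~` W) x by move=> /(_ (conj nC Ux)).
have := @locally_compact_completely_regular X R lcX hX _ _ clB nBx.
move=> /(@uniform_separatorP X R) [f [cf rf f0 f1]].
pose K := f @^-1` [set 0].
have Kx : K x by apply: f0; exists x.
have KW : K `<=` W.
  move=> y Ky; apply: contrapT => nW.
  have : [set f x | x in ~` W] (f y) by exists y.
  move/f1; rewrite /K /= in Ky; rewrite Ky => /eqP; by rewrite eq_sym oner_eq0.
have clK : closed K by have := @closed_eq R 0; exact: (iffLR (continuous_closedP f) cf).
exists K; split; last by split => // y /KW [].
split.
  apply: subclosed_compact clK cC _ => y /KW [+ _]; exact: interior_subset.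
exists (fun n : nat => f @^-1` [set r | r < n.+1%:R^-1]); split.
  move=> n; have := @open_lt R (n.+1%:R^-1); exact: (iffLR (continuousP f) cf).
apply/seteqP; split.
  move=> y Ky n _; rewrite /K /= in Ky; rewrite /= Ky invr_gt0 ltr0n //.
move=> y Hy.
have : range f (f y) by exists y.
move/rf; rewrite /= in_itv /= => /andP[fy0 _].
rewrite /K /=; apply/eqP; rewrite eq_le fy0 andbT.
rewrite leNgt; apply/negP => fyp.
have h1 := Hy (Num.trunc (f y)^-1) I; rewrite /= in h1.
have h2 := truncnS_gt (f y)^-1.
set m := (Num.trunc (f y)^-1).+1%:R in h1 h2.
have mp : 0 < m by rewrite ltr0n.
have k1 : f y * m < m^-1 * m by rewrite ltr_pM2r.
have k2 : (f y)^-1 * f y < m * f y by rewrite ltr_pM2r.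
rewrite mulVf ?gt_eqF // in k1.
rewrite mulVf ?gt_eqF // in k2.
rewrite mulrC in k2; lra.
Qed.

Theorem mainTheorem16 (R : realType) (X Y : topologicalType)
  (hX : hausdorff_space X) (lcX : locally_compact [set: X])
  (hY : hausdorff_space Y) (lcY : locally_compact [set: Y])
  (F : set (X -> R)) (HF : forall f, F f -> C0plus f)
  (Hpeak : peaks_on_compact_Gdelta F)
  (T : (X -> R) -> (Y -> R)) (HT : forall f, F f -> C0plus (T f))
  (Hnorm : forall (n : nat) (f : 'I_n -> (X -> R)), (forall i, F (f i)) ->
     supnorm (\sum_(i < n) T (f i)) = supnorm (\sum_(i < n) f i))
  (x1 x2 : X) : x1 <> x2 -> psupp F T x1 `&` psupp F T x2 = set0.
Proof.
move=> x12; rewrite -subset0 => y [P1 P2].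
have hX' := hX; rewrite open_hausdorff in hX'.
have [[A B] /= [xA yB] [oA oB /eqP AB0]] := hX' x1 x2 (introN eqP x12).
rewrite !inE in xA yB.
have [K1 [cK1 [K1x K1A]]] := @sep_Gdelta R X hX lcX _ _ oA xA.
have [K2 [cK2 [K2x K2B]]] := @sep_Gdelta R X hX lcX _ _ oB yB.
have [f1 Ff1 eK1] := Hpeak K1 (ex_intro _ x1 K1x) cK1.
have [f2 Ff2 eK2] := Hpeak K2 (ex_intro _ x2 K2x) cK2.
have pk1 : pk (T f1) y.
  apply: P1; split => //; rewrite eK1 in K1x; exact: K1x.
have pk2 : pk (T f2) y.
  apply: P2; split => //; rewrite eK2 in K2x; exact: K2x.
rewrite /pk /= in pk1 pk2.
have n1 : forall f, F f -> supnorm (T f) = supnorm f.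
  by move=> f Ff; have := Hnorm 1 (fun _ => f) (fun _ => Ff); rewrite !big_ord1.
have n2 := Hnorm 2 (fun i : 'I_2 => if val i == 0%N then f1 else f2)
  (fun i => if val i == 0%N as b return F (if b then f1 else f2) then Ff1 else Ff2).
rewrite !big_ord_recl !big_ord0 /= !addr0 in n2.
have [cf1 [f10 _]] := HF f1 Ff1.
have [cf2 [f20 _]] := HF f2 Ff2.
have [M1 hM1] := C0_bounded _ _ _ (HF f1 Ff1).
have [M2 hM2] := C0_bounded _ _ _ (HF f2 Ff2).
have [N1 hN1] := C0_bounded _ _ _ (HT f1 Ff1).
have [N2 hN2] := C0_bounded _ _ _ (HT f2 Ff2).
have [_ [Tf10 _]] := HT f1 Ff1.
have [_ [Tf20 _]] := HT f2 Ff2.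
have addE : forall (Z : Type) (g h : Z -> R) (z : Z), (g + h) z = g z + h z by [].
set a := supnorm f1 in n2 *.
set b := supnorm f2 in n2 *.
have Gy : a + b <= supnorm (T f1 + T f2).
  have -> : a + b = (T f1 + T f2) y by rewrite addE pk1 pk2 !n1.
  apply: sn_ub => [z|]; first by rewrite addE addr_ge0.
  by exists (N1 + N2) => z; rewrite addE lerD.
have f1a : forall x, f1 x <= a by move=> x; apply: sn_ub => //; exists M1.
have f2b : forall x, f2 x <= b by move=> x; apply: sn_ub => //; exists M2.
have nK1x2 : ~ K1 x2.
  by move=> /K1A Ax2; have : (A `&` B) x2 by []; rewrite AB0.
have ap : 0 < a.
  have h := f1a x2; have h0 := f10 x2.
  rewrite lt_neqAle; apply/andP; split; last by apply: le_trans h.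
  apply/eqP => a0; apply: nK1x2; rewrite eK1 /pk /=; change (f1 x2 = a).
  by apply/eqP; rewrite eq_le -a0 h0 andbT -[0]/(0:R) a0 h.
have [_ [_ cpt1]] := HF f1 Ff1.
have a2p : 0 < a / 2 by rewrite divr_gt0.
pose S := [set x | a / 2 <= `|f1 x|].
have cS : compact S := cpt1 _ a2p.
have neS : S !=set0.
  exists x1; rewrite /S /= ger0_norm //.
  have -> : f1 x1 = a by rewrite eK1 in K1x; exact: K1x.
  lra.
have cH : continuous (f1 + f2).
  by move=> x; apply: continuousD; [exact: cf1 | exact: cf2].
have [c Sc Hc] := compact_EVT_max neS cS (continuous_subspaceT cH).
have Hcl : (f1 + f2) c < a + b.
  rewrite addE.
  have h1 := f1a c; have h2 := f2b c.
  case: (ltrP (f1 c) a) => h1'; first lra.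
  case: (ltrP (f2 c) b) => h2'; first lra.
  exfalso.
  have e1 : K1 c by rewrite eK1 /pk /=; apply/eqP; rewrite eq_le h1 h1'.
  have e2 : K2 c by rewrite eK2 /pk /=; apply/eqP; rewrite eq_le h2 h2'.
  have : (A `&` B) c by split; [exact: K1A | exact: K2B].
  by rewrite AB0.
have bnd : forall x, (f1 + f2) x <= Num.max ((f1 + f2) c) (a / 2 + b).
  move=> x; rewrite le_max; apply/orP.
  case: (lerP (a / 2) (f1 x)) => hx.
    left; apply: Hc; rewrite inE /S /= ger0_norm //.
  right; rewrite addE; have := f2b x; lra.
have := sn_le _ _ (f1 + f2) _ x1 (fun z => addr_ge0 (f10 z) (f20 z)) bnd.
rewrite -n2 => hle.
have : Num.max ((f1 + f2) c) (a / 2 + b) < a + b.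
  rewrite gt_max Hcl /=; lra.
lra.
Qed.
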